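(* Let $\mathbb{K}=\mathbb{F}_q(\!(X)\!)$ be the field of formal Laurent series over a finite field $\mathbb{F}_q$, and $\mathbb{O}=\mathbb{F}_q[\![X]\!]$. Define $f\colon\mathbb{O}\to\mathbb{K}$ by $f\big(\sum_{k=0}^\infty a_kX^k\big)=\sum_{k=0}^\infty a_kX^{[\frac32 k]}$ ($a_k\in\mathbb{F}_q$), where $[r]$ denotes the integer part of $r\ge0$. Then $f$ is $C^\infty_{Lud}$, but not $C^2_{BGN}$.
   Context: $\mathbb{K}$ carries the absolute value with $|x|=q^{-k}$ for $0\neq x=\sum_k a_kX^k$, where $k$ is minimal with $a_k\neq0$; then $\mathbb{O}$ is an open compact subring. For a topological vector space $E$ over a topological field $\mathbb{K}$, an open $U\subseteq E$ and $g\colon U\to F$: $U^{[1]}=\{(x,y,t)\in U\times E\times\mathbb{K}: x+ty\in U\}$, $U^{]1[}=\{(x,y,t)\in U^{[1]}:t\ne0\}$, $g^{]1[}(x,y,t)=(g(x+ty)-g(x))/t$. $g$ is $C^1_{BGN}$ if continuous and $g^{]1[}$ extends continuously to $g^{[1]}\colon U^{[1]}\to F$; $C^k_{BGN}$ ($k\ge2$) if $C^1_{BGN}$ and $g^{[1]}$ is $C^{k-1}_{BGN}$ (on the open set $U^{[1]}$). Ludkovsky's $C^k$: $\Phi_1(U):=U^{]1[}$, $\overline{\Phi}_1(U):=U^{[1]}$; for $k\ge2$, $\overline{\Phi}_k(U)$ is the set of $(x,\xi_1,\ldots,\xi_k,t_1,\ldots,t_k)\in U\times E^k\times\mathbb{K}^k$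 with both $(x,\xi_1,\ldots,\xi_{k-1},t_1,\ldots,t_{k-1})$ and $(x+t_k\xi_k,\xi_1,\ldots,\xi_{k-1},t_1,\ldots,t_{k-1})$ in $\overline{\Phi}_{k-1}(U)$, and $\Phi_k(U)$ its subset with $t_k\ne0$. $g$ is $C^1_{Lud}$ if it is $C^1_{BGN}$; then $\overline{\Phi}_1(g):=g^{[1]}$. For $k\ge2$, $g$ is $C^k_{Lud}$ if it is $C^{k-1}_{Lud}$ and the map $\Phi_k(g)\colon\Phi_k(U)\to F$, $(x,\xi_1,\ldots,\xi_k,t_1,\ldots,t_k)\mapsto t_k^{-1}\big(\overline{\Phi}_{k-1}(g)(x+t_k\xi_k,\xi_1,\ldots,\xi_{k-1},t_1,\ldots,t_{k-1})-\overline{\Phi}_{k-1}(g)(x,\xi_1,\ldots,\xi_{k-1},t_1,\ldots,t_{k-1})\big)$ has a continuous extension $\overline{\Phi}_k(g)\colon\overline{\Phi}_k(U)\to F$. $C^\infty_{Lud}$ means $C^k_{Lud}$ for all $k\in\mathbb{N}$. *)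

(* Defs.v *)
From mathcomp Require Import all_boot all_algebra.
From Stdlib Require Import ZArith Reals Lia ClassicalEpsilon.

Set Implicit Arguments.
Unset Strict Implicit.
Unset Printing Implicit Defensive.

Section Laurent.
Variable F : finFieldType.

Record laurent := Laurent {
  coef : Z -> F;
  coef_lb : exists N : Z, forall k, (k < N)%Z -> coef k = GRing.zero
}.

Definition lb (a : laurent) : Z :=
  proj1_sig (constructive_indefinite_description _ (coef_lb a)).

Lemma lbP (a : laurent) k : (k < lb a)%Z -> coef a k = GRing.zero.
Proof.
rewrite /lb; case: (constructive_indefinite_description _ _) => N HN /=; exact: HN.
Qed.

Definition Lzero : laurent :=
  @Laurent (fun _ => GRing.zero) (ex_intro _ 0%Z (fun _ _ => erefl)).

Lemma Lone_lb : exists N : Z, forall k, (k < N)%Z ->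
  (if Z.eqb k 0 then (GRing.one F) else GRing.zero) = GRing.zero.
Proof.
exists 0%Z => k Hk; case: (Z.eqb_spec k 0) => // ?; lia.
Qed.
Definition Lone : laurent := Laurent Lone_lb.

Lemma Ladd_lb (a b : laurent) : exists N : Z, forall k, (k < N)%Z ->
  GRing.add (coef a k) (coef b k) = GRing.zero.
Proof.
exists (Z.min (lb a) (lb b)) => k Hk.
rewrite !lbP; [exact: GRing.addr0 | lia | lia].
Qed.
Definition Ladd (a b : laurent) : laurent := Laurent (Ladd_lb a b).

Lemma Lopp_lb (a : laurent) : exists N : Z, forall k, (k < N)%Z ->
  GRing.opp (coef a k) = GRing.zero.
Proof. exists (lb a) => k Hk; rewrite lbP //; exact: GRing.oppr0. Qed.
Definition Lopp (a : laurent) : laurent := Laurent (Lopp_lb a).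

Definition Lsub (a b : laurent) : laurent := Ladd a (Lopp b).

(* Cauchy product: (ab)_n = sum_{lb a <= i <= n - lb b} a_i b_(n-i) *)
Definition Lmul_coef (a b : laurent) (n : Z) : F :=
  \big[GRing.add/GRing.zero]_(j < Z.to_nat (n - lb a - lb b + 1))
     GRing.mul (coef a (lb a + Z.of_nat j)) (coef b (n - (lb a + Z.of_nat j))).

Lemma Lmul_lb (a b : laurent) : exists N : Z, forall k, (k < N)%Z ->
  Lmul_coef a b k = GRing.zero.
Proof.
exists (lb a + lb b)%Z => k Hk; rewrite /Lmul_coef.
have : (k - lb a - lb b + 1 <= 0)%Z by lia.
case: (k - lb a - lb b + 1)%Z => [|p|p] Hle; first by rewrite big_ord0.
- by exfalso; lia.
- by rewrite big_ord0.
Qed.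
Definition Lmul (a b : laurent) : laurent := Laurent (Lmul_lb a b).

(* multiplicative inverse in the field K (the unique b with a b = 1 if any;
   0 otherwise -- only used for a <> 0) *)
Definition Linv (a : laurent) : laurent :=
  epsilon (inhabits Lzero) (fun b => Lmul a b = Lone).

Definition Lval (a : laurent) : Z :=
  epsilon (inhabits 0%Z)
    (fun v => coef a v <> GRing.zero /\ forall k, (k < v)%Z -> coef a k = GRing.zero).

Definition Labs (a : laurent) : R :=
  match excluded_middle_informative (exists k, coef a k <> GRing.zero) with
  | left _ => powerRZ (INR #|F|) (- Lval a)
  | right _ => 0%R
  end.

Definition Ldist (a b : laurent) : R := Labs (Lsub a b).

Definition inO (a : laurent) : Prop := forall k, (k < 0)%Z -> coef a k = GRing.zero.

(* f (sum_{k>=0} a_k X^k) = sum_{k>=0} a_k X^[3k/2]; the exponent map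
   k |-> [3k/2] is injective, so the n-th coefficient is the sum of the
   (at most one) a_k with [3k/2] = n (and k <= n necessarily). *)
Definition fO_coef (a : laurent) (n : Z) : F :=
  if (n <? 0)%Z then GRing.zero else
  \big[GRing.add/GRing.zero]_(k < (Z.to_nat n).+1 | (3 * k)./2 == Z.to_nat n)
     coef a (Z.of_nat k).

Lemma fO_lb (a : laurent) : exists N : Z, forall k, (k < N)%Z ->
  fO_coef a k = GRing.zero.
Proof.
exists 0%Z => k Hk; rewrite /fO_coef.
by have -> : (k <? 0)%Z = true by apply/Z.ltb_lt.
Qed.
Definition fO (a : laurent) : laurent := Laurent (fO_lb a).

End Laurent.

Record space (F : finFieldType) := Space {
  pt :> Type;
  padd : pt -> pt -> pt;
  pscale : laurent F -> pt -> pt;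
  pdist : pt -> pt -> R
}.

Definition Kspace (F : finFieldType) : space F :=
  @Space F (laurent F) (@Ladd F) (@Lmul F) (@Ldist F).

Definition prod3 (F : finFieldType) (E : space F) : space F :=
  @Space F (E * E * laurent F)
    (fun p q => (padd p.1.1 q.1.1, padd p.1.2 q.1.2, Ladd p.2 q.2))
    (fun s p => (pscale s p.1.1, pscale s p.1.2, Lmul s p.2))
    (fun p q => Rmax (Rmax (pdist p.1.1 q.1.1) (pdist p.1.2 q.1.2)) (Ldist p.2 q.2)).

Definition cont_on (F : finFieldType) (E : space F) (A : E -> Prop)
    (h : E -> laurent F) : Prop :=
  forall p, A p -> forall eps : R, (0 < eps)%R -> exists del : R, (0 < del)%R /\
    forall p', A p' -> (pdist p p' < del)%R -> (Ldist (h p) (h p') < eps)%R.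

Definition U1 (F : finFieldType) (E : space F) (U : E -> Prop) : prod3 E -> Prop :=
  fun p => U p.1.1 /\ U (padd p.1.1 (pscale p.2 p.1.2)).

Definition diffq (F : finFieldType) (E : space F) (g : E -> laurent F) :
    prod3 E -> laurent F :=
  fun p => Lmul (Linv p.2) (Lsub (g (padd p.1.1 (pscale p.2 p.1.2))) (g p.1.1)).

(* C^k_BGN on U (k >= 1; CBGN 0 is mere continuity, used only as base case):
   C^(k+1) : g continuous, g^]1[ has a continuous extension g^[1] on U^[1],
   and g^[1] is C^k on U^[1]. *)
Fixpoint CBGN (F : finFieldType) (k : nat) (E : space F) (U : E -> Prop)
    (g : E -> laurent F) {struct k} : Prop :=
  match k with
  | 0 => cont_on U g
  | k'.+1 => cont_on U g /\
      exists G : prod3 E -> laurent F,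
        (forall p, U1 U p -> p.2 <> Lzero F -> G p = diffq g p) /\
        cont_on (U1 U) G /\
        CBGN k' (U1 U) G
  end.

(* A point (x, xi_1..xi_k, t_1..t_k) is encoded as x together with the list
   [:: (xi_k,t_k); ...; (xi_1,t_1)] (last pair at the head). *)

Fixpoint Phibar (F : finFieldType) (U : laurent F -> Prop) (x : laurent F)
    (ps : seq (laurent F * laurent F)) : Prop :=
  match ps with
  | [::] => U x
  | (xi, t) :: ps' => Phibar U x ps' /\ Phibar U (Ladd x (Lmul t xi)) ps'
  end.

Fixpoint ldist (F : finFieldType) (ps qs : seq (laurent F * laurent F)) : R :=
  match ps, qs with
  | (a, b) :: ps', (c, d) :: qs' => Rmax (Rmax (Ldist a c) (Ldist b d)) (ldist ps' qs')
  | _, _ => 0%R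
  end.

(* G x ps (with size ps = j) plays the role of Phibar_j(g); G x [::] = g x. *)
Definition CLud (F : finFieldType) (k : nat) (U : laurent F -> Prop)
    (g : laurent F -> laurent F) : Prop :=
  cont_on (E := Kspace F) U g /\
  exists G : laurent F -> seq (laurent F * laurent F) -> laurent F,
    (forall x, U x -> G x [::] = g x) /\
    forall j : nat, (1 <= j <= k)%nat ->
      (forall x xi t ps, size ps = j.-1 -> Phibar U x ((xi, t) :: ps) -> t <> Lzero F ->
         G x ((xi, t) :: ps) =
         Lmul (Linv t) (Lsub (G (Ladd x (Lmul t xi)) ps) (G x ps))) /\
      (forall x ps, size ps = j -> Phibar U x ps ->
         forall eps : R, (0 < eps)%R -> exists del : R, (0 < del)%R /\
           forall x' ps', size ps' = j -> Phibar U x' ps' ->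
             (Rmax (Ldist x x') (ldist ps ps') < del)%R ->
             (Ldist (G x ps) (G x' ps') < eps)%R).

Definition CLud_inf (F : finFieldType) (U : laurent F -> Prop)
    (g : laurent F -> laurent F) : Prop :=
  forall k, CLud k U g.

(* Main.v *)
Require Import Defs.
From mathcomp Require Import all_boot all_algebra.
From mathcomp Require Import zify.
From Stdlib Require Import ZArith Reals Lia ClassicalEpsilon FunctionalExtensionality ProofIrrelevance Classical Lra.
Set Implicit Arguments.
Unset Strict Implicit.
Unset Printing Implicit Defensive.
Import GRing.Theory.

Section L.
Variable F : finFieldType.
Local Open Scope ring_scope.

Lemma Lext (a b : laurent F) : (forall k, coef a k = coef b k) -> a = b.
Proof.
case: a => ca pa; case: b => cb pb /= H.
have E : ca = cb by apply: functional_extensionality.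
subst cb; f_equal; apply: proof_irrelevance.
Qed.

Definition vanish (a : laurent F) (al : Z) := forall i, (i < al)%Z -> coef a i = 0.

Lemma sum_right (T : Z -> F) (al : Z) (M d : nat) :
  (forall i, (al + Z.of_nat M <= i)%Z -> T i = 0) ->
  \sum_(j < M + d) T (al + Z.of_nat j)%Z = \sum_(j < M) T (al + Z.of_nat j)%Z.
Proof.
move=> H; elim: d => [|d IH]; first by rewrite addn0.
rewrite addnS big_ord_recr /= IH H ?addr0 //; lia.
Qed.

Lemma sum_left (T : Z -> F) (d K : nat) : forall (g : Z),
  (forall i, (g <= i < g + Z.of_nat d)%Z -> T i = 0) ->
  \sum_(j < d + K) T (g + Z.of_nat j)%Z = \sum_(j < K) T (g + Z.of_nat d + Z.of_nat j)%Z.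
Proof.
elim: d => [|d IH] g H.
  by rewrite add0n; apply: eq_bigr => j _; f_equal; lia.
rewrite addSn big_ord_recl /= H; last by lia.
rewrite add0r.
transitivity (\sum_(j < d + K) T (g + 1 + Z.of_nat j)%Z).
  by apply: eq_bigr => j _; f_equal; lia.
rewrite IH; last by move=> i Hi; apply: H; lia.
apply: eq_bigr => j _; f_equal; lia.
Qed.

Lemma sum_canon (T : Z -> F) (al g : Z) (M K : nat) :
  (g <= al)%Z -> (al + Z.of_nat M <= g + Z.of_nat K)%Z ->
  (forall i, (i < al)%Z -> T i = 0) ->
  (forall i, (al + Z.of_nat M <= i)%Z -> T i = 0) ->
  \sum_(j < M) T (al + Z.of_nat j)%Z = \sum_(j < K) T (g + Z.of_nat j)%Z.
Proof.
move=> H1 H2 H3 H4.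
pose d := Z.to_nat (al - g).
pose e := (K - (d + M))%nat.
have -> : K = (d + (M + e))%nat by rewrite /e /d; lia.
rewrite sum_left; last by move=> i Hi; apply: H3; rewrite /d in Hi; lia.
rewrite sum_right //; last by move=> i Hi; apply: H4; rewrite /d in Hi; lia.
apply: eq_bigr => j _; f_equal; rewrite /d; lia.
Qed.

Lemma Lmul_win (a b : laurent F) (al be n : Z) :
  vanish a al -> vanish b be ->
  coef (Lmul a b) n =
  \sum_(j < Z.to_nat (n - al - be + 1)) coef a (al + Z.of_nat j)%Z * coef b (n - (al + Z.of_nat j))%Z.
Proof.
move=> Ha Hb /=; rewrite /Lmul_coef.
pose T i := coef a i * coef b (n - i)%Z.
have Ta : forall i, (i < al)%Z -> T i = 0 by move=> i Hi; rewrite /T Ha // mul0r.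
have Ta' : forall i, (i < lb a)%Z -> T i = 0 by move=> i Hi; rewrite /T lbP // mul0r.
have Tb : forall i, (n - be < i)%Z -> T i = 0 by move=> i Hi; rewrite /T Hb ?mulr0 //; lia.
have Tb' : forall i, (n - lb b < i)%Z -> T i = 0 by move=> i Hi; rewrite /T (@lbP _ b) ?mulr0 //; lia.
pose g := Z.min al (lb a).
pose K := Z.to_nat (Z.abs al + Z.abs (lb a) + Z.abs n + Z.abs be + Z.abs (lb b) + 1).
rewrite (@sum_canon T (lb a) g _ K); first last.
- move=> i Hi; apply: Tb'; lia.
- exact: Ta'.
- rewrite /K /g; lia.
- rewrite /g; lia.
rewrite (@sum_canon T al g _ K) //; first last.
- move=> i Hi; apply: Tb; lia.
- rewrite /K /g; lia.
- rewrite /g; lia.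
Qed.


Lemma Lmul_vanish (a b : laurent F) al be :
  vanish a al -> vanish b be -> vanish (Lmul a b) (al + be).
Proof.
move=> Ha Hb n Hn; rewrite (Lmul_win n Ha Hb).
have -> : Z.to_nat (n - al - be + 1) = 0%nat by lia.
by rewrite big_ord0.
Qed.

Definition agree (N : Z) (a b : laurent F) := forall k, (k <= N)%Z -> coef a k = coef b k.

Lemma Lmul_agree (a a' b b' : laurent F) al be A B n :
  vanish a al -> vanish a' al -> vanish b be -> vanish b' be ->
  agree A a a' -> agree B b b' -> (n - be <= A)%Z -> (n - al <= B)%Z ->
  coef (Lmul a b) n = coef (Lmul a' b') n.
Proof.
move=> Ha Ha' Hb Hb' HA HB H1 H2.
rewrite (Lmul_win n Ha Hb) (Lmul_win n Ha' Hb').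
apply: eq_bigr => j _.
have Hj := ltn_ord j.
rewrite HA; last by lia.
by rewrite HB; last by lia.
Qed.

Lemma Lmul_mono (a b : laurent F) al n :
  vanish a al -> (forall i, (al < i)%Z -> coef a i = 0) ->
  coef (Lmul a b) n = coef a al * coef b (n - al)%Z.
Proof.
move=> Ha Ha2.
have Hb : vanish b (lb b) by move=> i; apply: lbP.
rewrite (Lmul_win n Ha Hb).
case E: (Z.to_nat (n - al - lb b + 1)) => [|m].
  by rewrite big_ord0 (@lbP _ b) ?mulr0 //; lia.
rewrite big_ord_recl /= big1 ?addr0; last first.
  by move=> j _; rewrite Ha2 ?mul0r //; lia.
by do 2 f_equal; lia.
Qed.

Lemma vanish_ex (a : laurent F) : (exists k, coef a k <> 0) ->
  exists v, coef a v <> 0 /\ vanish a v.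
Proof.
move=> Hex.
have exP : exists m, (coef a (lb a + Z.of_nat m)%Z != 0).
  case: Hex => k Hk.
  have Hk2 : (lb a <= k)%Z.
    case: (Z.lt_ge_cases k (lb a)) => // H; by case: Hk; rewrite lbP.
  exists (Z.to_nat (k - lb a)); apply/eqP.
  by have -> : (lb a + Z.of_nat (Z.to_nat (k - lb a)))%Z = k by lia.
case: (ex_minnP exP) => m /eqP Hm Hmin.
exists (lb a + Z.of_nat m)%Z; split => // i Hi.
case: (Z.lt_ge_cases i (lb a)) => H; first by rewrite lbP.
have := Hmin (Z.to_nat (i - lb a)).
have -> : (lb a + Z.of_nat (Z.to_nat (i - lb a)))%Z = i by lia.
case: (coef a i =P 0) => // Hne /(_ isT); lia.
Qed.

Lemma Lzero_iff (a : laurent F) : a = Lzero F <-> forall k, coef a k = 0.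
Proof.
split; first by move=> -> k.
by move=> H; apply: Lext.
Qed.

Lemma nonzero_ex (a : laurent F) : a <> Lzero F -> exists k, coef a k <> 0.
Proof.
move=> H; apply: NNPP => H2; apply: H; apply/Lzero_iff => k.
by apply: NNPP => H3; apply: H2; exists k.
Qed.


Section Inv.
Variables (t : laurent F) (v : Z).
Hypothesis Ht : vanish t v.
Hypothesis Htv : coef t v <> 0.

Fixpoint bf (m : nat) : nat -> F :=
  match m with
  | 0%nat => fun _ => (coef t v)^-1
  | m'.+1 => fun k => if (k <= m')%nat then bf m' k else
      - (coef t v)^-1 * \sum_(i < m'.+1) coef t (v + Z.of_nat i.+1)%Z * bf m' (m' - i)%nat
  end.

Lemma bf_stable d m k : (k <= m)%nat -> bf (m + d) k = bf m k.
Proof.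
move=> Hk; elim: d => [|d IH]; first by rewrite addn0.
by rewrite addnS /= (_ : (k <= m + d)%nat = true) ?IH //; lia.
Qed.

Definition bc m := bf m m.

Lemma bc_rec m : bc m.+1 =
  - (coef t v)^-1 * \sum_(i < m.+1) coef t (v + Z.of_nat i.+1)%Z * bc (m - i)%nat.
Proof.
rewrite /bc /= ltnn; congr (_ * _); apply: eq_bigr => i _.
have Hi := ltn_ord i.
have E : bf m (m - i) = bf ((m - i) + i) (m - i).
  by congr bf; lia.
by rewrite E bf_stable.
Qed.

Lemma binv_lb : exists N : Z, forall k, (k < N)%Z ->
  (if (k <? - v)%Z then 0 else bc (Z.to_nat (k + v))) = 0.
Proof. by exists (- v)%Z => k Hk; have -> : (k <? - v)%Z = true by apply/Z.ltb_lt. Qed.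

Definition binv : laurent F := Laurent binv_lb.

Lemma binv_vanish : vanish binv (- v).
Proof. by move=> k Hk /=; have -> : (k <? - v)%Z = true by apply/Z.ltb_lt. Qed.

Lemma binv_inv : Lmul t binv = Lone F.
Proof.
apply: Lext => n.
rewrite (Lmul_win n Ht binv_vanish) /=.
case: (Z.lt_ge_cases n 0) => Hn.
  have -> : Z.to_nat (n - v - - v + 1) = 0%nat by lia.
  by rewrite big_ord0; have -> : (n =? 0)%Z = false by apply/Z.eqb_neq; lia.
have [m Hm] : exists m, n = Z.of_nat m by exists (Z.to_nat n); lia.
subst n.
have -> : Z.to_nat (Z.of_nat m - v - - v + 1) = m.+1 by lia.
transitivity (\sum_(j < m.+1) coef t (v + Z.of_nat j)%Z * bc (m - j)%nat).
  apply: eq_bigr => j _; have Hj := ltn_ord j.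
  have -> : (Z.of_nat m - (v + Z.of_nat j) <? - v)%Z = false.
    apply/Z.ltb_ge; lia.
  by do 3 f_equal; lia.
move: Hn; case: m => [|m] Hn.
  by rewrite big_ord1 /= Z.add_0_r /bc /= mulfV //; apply/eqP.
rewrite big_ord_recl /= Z.add_0_r bc_rec mulrA mulrN mulfV; last by apply/eqP.
rewrite mulN1r.
rewrite [X in _ + X](_ : _ = \sum_(i < m.+1) coef t (v + Z.of_nat i.+1)%Z * bc (m - i)) ?addNr //.
Qed.

End Inv.


Lemma Linv_spec (t : laurent F) v : vanish t v -> coef t v <> 0 ->
  Lmul t (Linv t) = Lone F.
Proof.
move=> Ht Htv; rewrite /Linv; apply: (epsilon_spec (inhabits (Lzero F)) (fun b => Lmul t b = Lone F)).
by exists (binv t v); apply: binv_inv.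
Qed.

Lemma Lone_coef k : coef (Lone F) k = if (k =? 0)%Z then 1 else 0.
Proof. by []. Qed.

Lemma inv_vanish (t b : laurent F) v : vanish t v -> coef t v <> 0 ->
  Lmul t b = Lone F -> vanish b (- v).
Proof.
move=> Ht Htv Hb i Hi; apply: NNPP => Hne.
have [w [Hw Hwv]] : exists w, coef b w <> 0 /\ vanish b w by apply: vanish_ex; exists i.
have Hwi : (w <= i)%Z by case: (Z.lt_ge_cases i w) => // H; case: Hne; apply: Hwv.
have : coef (Lmul t b) (v + w)%Z = coef (Lone F) (v + w)%Z by rewrite Hb.
rewrite (Lmul_win _ Ht Hwv) Lone_coef.
have -> : Z.to_nat (v + w - v - w + 1) = 1%nat by lia.
have -> : (v + w =? 0)%Z = false by apply/Z.eqb_neq; lia.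
rewrite big_ord1 /= Z.add_0_r.
have -> : (v + w - v)%Z = w by lia.
by move/eqP; rewrite mulf_eq0 => /orP [] /eqP.
Qed.

Lemma rec_eq (t b : laurent F) v (m : nat) : vanish t v -> vanish b (- v) ->
  coef (Lmul t b) (Z.of_nat m) = coef t v * coef b (Z.of_nat m - v)%Z +
   \sum_(j < m) coef t (v + Z.of_nat j.+1)%Z * coef b (Z.of_nat m - (v + Z.of_nat j.+1))%Z.
Proof.
move=> Ht Hb; rewrite (Lmul_win _ Ht Hb).
have -> : Z.to_nat (Z.of_nat m - v - - v + 1) = m.+1 by lia.
rewrite big_ord_recl /= Z.add_0_r; congr (_ * _ + _).
Qed.

Lemma inv_agree (t t' b b' : laurent F) v (K : Z) : (0 <= K)%Z ->
  vanish t v -> vanish t' v -> coef t v <> 0 -> agree (v + K) t t' ->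
  Lmul t b = Lone F -> Lmul t' b' = Lone F -> agree (- v + K) b b'.
Proof.
move=> K0 Ht Ht' Htv HA Hb Hb'.
have Htv' : coef t' v <> 0 by rewrite -HA //; lia.
have Vb := inv_vanish Ht Htv Hb.
have Vb' := inv_vanish Ht' Htv' Hb'.
suff H : forall m : nat, forall m' : nat, (m' <= m)%nat -> (Z.of_nat m <= K)%Z ->
   coef b (- v + Z.of_nat m')%Z = coef b' (- v + Z.of_nat m')%Z.
  move=> k Hk; case: (Z.lt_ge_cases k (- v)) => Hkv; first by rewrite Vb // Vb'.
  have := H (Z.to_nat (k + v)) (Z.to_nat (k + v)) (leqnn _).
  have -> : (- v + Z.of_nat (Z.to_nat (k + v)))%Z = k by lia.
  by apply; lia.
elim=> [|m IH] m' Hm' HK.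
  have -> : m' = 0%nat by lia.
  have : coef (Lmul t b) (Z.of_nat 0) = coef (Lone F) (Z.of_nat 0) by rewrite Hb.
  have : coef (Lmul t' b') (Z.of_nat 0) = coef (Lone F) (Z.of_nat 0) by rewrite Hb'.
  rewrite !(@rec_eq _ _ v 0) // !big_ord0 !addr0 -HA; last by lia.
  move=> E1 E2; have Hne : coef t v != 0 by apply/eqP.
  apply: (mulfI Hne).
  have -> : (- v + Z.of_nat 0)%Z = (Z.of_nat 0 - v)%Z by lia.
  by rewrite E1 E2.
case: (leqP m' m) => Hm'm; first by apply: IH => //; lia.
have -> : m' = m.+1 by lia.
have : coef (Lmul t b) (Z.of_nat m.+1) = coef (Lone F) (Z.of_nat m.+1) by rewrite Hb.
have : coef (Lmul t' b') (Z.of_nat m.+1) = coef (Lone F) (Z.of_nat m.+1) by rewrite Hb'.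
rewrite !(@rec_eq _ _ v m.+1) //.
have -> : \sum_(j < m.+1) coef t' (v + Z.of_nat j.+1)%Z * coef b' (Z.of_nat m.+1 - (v + Z.of_nat j.+1))%Z
   = \sum_(j < m.+1) coef t (v + Z.of_nat j.+1)%Z * coef b (Z.of_nat m.+1 - (v + Z.of_nat j.+1))%Z.
  apply: eq_bigr => j _; have Hj := ltn_ord j.
  rewrite HA; last by lia.
  have := IH (m - j)%nat (leq_subr _ _); move=> /(_ ltac:(lia)).
  have -> : (- v + Z.of_nat (m - j))%Z = (Z.of_nat m.+1 - (v + Z.of_nat j.+1))%Z by lia.
  by move=> ->.
rewrite -HA; last by lia.
move=> E1 E2; have Hne : coef t v != 0 by apply/eqP.
apply: (mulfI Hne); apply: (addIr (\sum_(j < m.+1) coef t (v + Z.of_nat j.+1)%Z * coef b (Z.of_nat m.+1 - (v + Z.of_nat j.+1))%Z)).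
have -> : (- v + Z.of_nat m.+1)%Z = (Z.of_nat m.+1 - v)%Z by lia.
by rewrite E1 E2.
Qed.


Definition q : R := INR #|F|.
Definition e (N : Z) : R := powerRZ q (- N).

Lemma q_gt1 : Rlt 1 q.
Proof.
rewrite /q; have H := card_finNzRing_gt1 F.
have -> : 1%R = INR 1 by [].
apply: lt_INR; apply/ltP; exact: H.
Qed.

Lemma e_pos N : Rlt 0 (e N).
Proof. apply: powerRZ_lt; have := q_gt1; lra. Qed.

Lemma e_lt x y : Rlt (e x) (e y) <-> (y < x)%Z.
Proof.
have Hq := q_gt1; have Hq0 : Rlt 0 q by lra.
rewrite /e !powerRZ_Rpower //; split => H.
  case: (Z.lt_ge_cases y x) => // Hyx; exfalso.
  have : Rle (Rpower q (IZR (- y))) (Rpower q (IZR (- x))).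
    apply: Rle_Rpower; first lra.
    apply: IZR_le; lia.
  lra.
apply: Rpower_lt => //; apply: IZR_lt; lia.
Qed.

Lemma e_le x y : (y <= x)%Z -> Rle (e x) (e y).
Proof.
move=> H; case: (Z.eq_dec x y) => [->|Hne]; first lra.
by apply: Rlt_le; apply/e_lt; lia.
Qed.

Lemma e_small eps : Rlt 0 eps -> exists N, Rlt (e N) eps.
Proof.
move=> He.
have Hq := q_gt1; have Hq0 : Rlt 0 q by lra.
have Hl : Rlt 0 (ln q) by rewrite -ln_1; apply: ln_increasing; lra.
pose r := (- ln eps / ln q)%R.
have [H1 _] := archimed r.
exists (up r); rewrite /e powerRZ_Rpower // /Rpower.
rewrite -(exp_ln eps) //; apply: exp_increasing.
rewrite opp_IZR -Ropp_mult_distr_l.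
have H : Rlt (Rmult r (ln q)) (Rmult (IZR (up r)) (ln q)) by apply: Rmult_lt_compat_r.
have E : Rmult r (ln q) = Ropp (ln eps) by rewrite /r; field; lra.
lra.
Qed.

Lemma Lval_spec (a : laurent F) : (exists k, coef a k <> 0) ->
  coef a (Lval a) <> 0 /\ vanish a (Lval a).
Proof.
move=> H; rewrite /Lval.
apply: (epsilon_spec (inhabits 0%Z) (fun v => coef a v <> GRing.zero /\ forall k, (k < v)%Z -> coef a k = GRing.zero)).
exact: vanish_ex.
Qed.

Lemma Labs_small (a : laurent F) N : (forall k, (k <= N)%Z -> coef a k = 0) -> Rlt (Labs a) (e N).
Proof.
move=> H; rewrite /Labs; case: excluded_middle_informative => Hex; last exact: e_pos.
have [H1 H2] := Lval_spec Hex.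
have : (N < Lval a)%Z by case: (Z.lt_ge_cases N (Lval a)) => // Hle; case: H1; apply: H.
move=> HN; exact: (proj2 (e_lt (Lval a) N) HN).
Qed.

Lemma small_Labs (a : laurent F) N : Rlt (Labs a) (e N) -> forall k, (k <= N)%Z -> coef a k = 0.
Proof.
rewrite /Labs; case: excluded_middle_informative => Hex H k Hk; last first.
  by apply: NNPP => Hne; apply: Hex; exists k.
have [H1 H2] := Lval_spec Hex.
have : Rlt (e (Lval a)) (e N) by [].
move/e_lt => HN; apply: H2; lia.
Qed.

Lemma Ldist_agree (a b : laurent F) N : Rlt (Ldist a b) (e N) <-> agree N a b.
Proof.
split.
  move=> H k Hk; have := small_Labs H Hk => /= /eqP; rewrite subr_eq0 => /eqP //.
move=> H; apply: Labs_small => k Hk /=; rewrite H // subrr //.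
Qed.


Lemma fO_coefE (a : laurent F) n : coef (fO a) n =
  if (n <? 0)%Z then 0 else
  \sum_(k < (Z.to_nat n).+1 | (3 * k)./2 == Z.to_nat n) coef a (Z.of_nat k).
Proof. by []. Qed.

Lemma fO_agree (a b : laurent F) N : agree N a b -> agree N (fO a) (fO b).
Proof.
move=> H k Hk; rewrite !fO_coefE; case: (Z.ltb_spec k 0) => // Hk0.
apply: eq_bigr => j _; have Hj := ltn_ord j; apply: H; lia.
Qed.

Lemma fO_ext (a b : laurent F) : (forall k, coef a k = coef b k) -> fO a = fO b.
Proof.
move=> H; apply: Lext => k; apply: (@fO_agree a b k _ k (Z.le_refl k)) => i _; exact: H.
Qed.

Lemma fO_vanish (a : laurent F) : vanish (fO a) 0.
Proof. by move=> k Hk; rewrite fO_coefE; have -> : (k <? 0)%Z = true by apply/Z.ltb_lt. Qed.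

Lemma fO_small (a : laurent F) w m : vanish a w -> (2 * m + 1 < 3 * w)%Z -> coef (fO a) m = 0.
Proof.
move=> Ha Hm; rewrite fO_coefE; case: (Z.ltb_spec m 0) => // Hm0.
rewrite big1 // => k /eqP Hk; apply: Ha; lia.
Qed.

Lemma fO_add (a b : laurent F) m : coef (fO (Ladd a b)) m = coef (fO a) m + coef (fO b) m.
Proof.
rewrite !fO_coefE; case: (m <? 0)%Z; first by rewrite addr0.
by rewrite -big_split.
Qed.

Lemma mono_lb (n : Z) : exists N : Z, forall k, (k < N)%Z ->
  (if (k =? n)%Z then (1 : F) else 0) = 0.
Proof. by exists n => k Hk; have -> : (k =? n)%Z = false by apply/Z.eqb_neq; lia. Qed.

Definition mono (n : Z) : laurent F := Laurent (mono_lb n).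

Lemma mono_vanish n : vanish (mono n) n.
Proof. by move=> k Hk /=; have -> : (k =? n)%Z = false by apply/Z.eqb_neq; lia. Qed.

Lemma mono_vanish2 n : forall i, (n < i)%Z -> coef (mono n) i = 0.
Proof. by move=> k Hk /=; have -> : (k =? n)%Z = false by apply/Z.eqb_neq; lia. Qed.

Lemma mono_nn n : coef (mono n) n = 1.
Proof. by rewrite /= Z.eqb_refl. Qed.

Lemma fO_mono (n0 : nat) m : coef (fO (mono (Z.of_nat n0))) m =
  if (m =? Z.of_nat (3 * n0)./2)%Z then 1 else 0.
Proof.
rewrite fO_coefE; case: (Z.ltb_spec m 0) => Hm.
  by have -> : (m =? Z.of_nat (3 * n0)./2)%Z = false by apply/Z.eqb_neq; lia.
case: (Z.eqb_spec m (Z.of_nat (3 * n0)./2)) => Hmn.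
  have Hlt : (n0 < (Z.to_nat m).+1)%nat by lia.
  rewrite (bigD1 (Ordinal Hlt)) /=; last by apply/eqP; lia.
  rewrite Z.eqb_refl big1 ?addr0 // => k /andP [_ Hk].
  have -> : (Z.of_nat k =? Z.of_nat n0)%Z = false => //.
  apply/Z.eqb_neq => E; move: Hk; have -> : k = Ordinal Hlt by apply: val_inj => /=; lia.
  by rewrite eqxx.
rewrite big1 // => k /eqP Hk /=.
have -> : (Z.of_nat k =? Z.of_nat n0)%Z = false => //.
apply/Z.eqb_neq => E; lia.
Qed.


Lemma Lsub_coef (a b : laurent F) k : coef (Lsub a b) k = coef a k - coef b k.
Proof. by []. Qed.

Lemma Ladd_coef (a b : laurent F) k : coef (Ladd a b) k = coef a k + coef b k.
Proof. by []. Qed.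

Lemma Lsub_self (a : laurent F) : Lsub a a = Lzero F.
Proof. by apply: Lext => k; rewrite Lsub_coef subrr. Qed.

Lemma Lmul_0r (a : laurent F) : Lmul a (Lzero F) = Lzero F.
Proof.
apply: Lext => k /=; rewrite /Lmul_coef big1 // => j _; exact: mulr0.
Qed.

Lemma Lmul_0l (a : laurent F) : Lmul (Lzero F) a = Lzero F.
Proof.
apply: Lext => k /=; rewrite /Lmul_coef big1 // => j _; exact: mul0r.
Qed.

Lemma Ldist_self (a : laurent F) : Ldist a a = 0%R.
Proof.
rewrite /Ldist /Labs; case: excluded_middle_informative => // [[k Hk]].
by case: Hk; rewrite Lsub_coef subrr.
Qed.

Definition h (xi t : laurent F) : laurent F :=
  if excluded_middle_informative (t = Lzero F) then Lzero F
  else Lmul (Linv t) (fO (Lmul t xi)).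

Lemma h_zero xi t : t = Lzero F -> h xi t = Lzero F.
Proof. by rewrite /h; case: excluded_middle_informative. Qed.

Lemma h_nz xi t : t <> Lzero F -> h xi t = Lmul (Linv t) (fO (Lmul t xi)).
Proof. by rewrite /h; case: excluded_middle_informative. Qed.

Lemma agree_refl N (a : laurent F) : agree N a a.
Proof. by []. Qed.

Lemma h_cont (xi0 t0 : laurent F) N : exists M : Z,
  forall xi t, agree M xi0 xi -> agree M t0 t -> agree N (h xi0 t0) (h xi t).
Proof.
pose be := lb xi0.
have Vxi0 : vanish xi0 be by move=> i; apply: lbP.
case: (excluded_middle_informative (t0 = Lzero F)) => Ht0.
  exists (2 * Z.abs N + 3 * Z.abs be + 2)%Z => xi t Hxi Ht.
  rewrite h_zero //.
  case: (excluded_middle_informative (t = Lzero F)) => Htz; first by rewrite h_zero.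
  rewrite h_nz //.
  have [v [Htv Vt]] := vanish_ex (nonzero_ex Htz).
  have Hv : (2 * Z.abs N + 3 * Z.abs be + 2 < v)%Z.
    case: (Z.lt_ge_cases (2 * Z.abs N + 3 * Z.abs be + 2) v) => // Hle.
    by case: Htv; rewrite -Ht // Ht0.
  have Vxi : vanish xi be by move=> i Hi; rewrite -Hxi ?Vxi0 //; lia.
  have Hb := Linv_spec Vt Htv.
  have Vb := inv_vanish Vt Htv Hb.
  have Vz := Lmul_vanish Vt Vxi.
  have Vf : vanish (fO (Lmul t xi)) (N + v + 1) by move=> m Hm; apply: (fO_small Vz); lia.
  have V := Lmul_vanish Vb Vf.
  by move=> k Hk; rewrite V //; lia.
have [v [Htv Vt0]] := vanish_ex (nonzero_ex Ht0).
pose M := (2 * Z.abs N + 4 * Z.abs v + 2 * Z.abs be + 2)%Z.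
exists M => xi t Hxi Ht.
have Vt : vanish t v by move=> i Hi; rewrite -Ht ?Vt0 //; rewrite /M; lia.
have Htv' : coef t v <> 0 by rewrite -Ht //; rewrite /M; lia.
have Htz : t <> Lzero F by move=> E; apply: Htv'; rewrite E.
rewrite !h_nz //.
have Vxi : vanish xi be by move=> i Hi; rewrite -Hxi ?Vxi0 //; rewrite /M; lia.
have Hb0 := Linv_spec Vt0 Htv.
have Hb := Linv_spec Vt Htv'.
have Ab : agree (- v + (M - v)) (Linv t0) (Linv t).
  apply: (inv_agree _ Vt0 Vt Htv _ Hb0 Hb); first by rewrite /M; lia.
  by have -> : (v + (M - v))%Z = M by lia.
have Vb0 := inv_vanish Vt0 Htv Hb0.
have Vb := inv_vanish Vt Htv' Hb.
pose X := (M - Z.abs be - Z.abs v)%Z.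
have Az : agree X (Lmul t0 xi0) (Lmul t xi).
  move=> n Hn; apply: (Lmul_agree Vt0 Vt Vxi0 Vxi Ht Hxi); rewrite /X in Hn; lia.
have Af := fO_agree Az.
move=> n Hn.
apply: (Lmul_agree Vb0 Vb (fO_vanish _) (fO_vanish _) Ab Af); rewrite /X /M; lia.
Qed.


Definition Gl (x : laurent F) (ps : seq (laurent F * laurent F)) : laurent F :=
  match ps with
  | [::] => fO x
  | (xi, t) :: [::] => h xi t
  | _ => Lzero F
  end.

Lemma CLud_all k : CLud k (@inO F) (@fO F).
Proof.
split.
  move=> p _ eps Heps; have [N HN] := e_small Heps.
  exists (e N); split; first exact: e_pos.
  move=> p' _ Hd; apply: Rlt_trans HN; apply/Ldist_agree; apply: fO_agree.
  exact/Ldist_agree.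
exists Gl; split => // j Hj; split.
  move=> x xi t ps Hs Hphi Htz.
  case: ps Hs Hphi => [|[xi1 t1] [|p ps]] Hs Hphi.
  - rewrite [Gl x _]/= h_nz //; congr Lmul; apply: Lext => n.
    rewrite Lsub_coef [Gl _ _]/= [Gl x _]/= fO_add. by rewrite addrAC subrr add0r.
  - by rewrite [Gl x _]/= [Gl (Ladd _ _) _]/= [Gl x _]/= Lsub_self Lmul_0r.
  - by rewrite [Gl x _]/= [Gl (Ladd _ _) _]/= [Gl x _]/= Lsub_self Lmul_0r.
move=> x ps Hs Hphi eps Heps.
case: ps Hs Hphi => [|[xi0 t0] [|p ps]] Hs Hphi.
- by exfalso; move: Hj; rewrite -Hs.
- have [N HN] := e_small Heps; have [M HM] := h_cont xi0 t0 N.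
  exists (e M); split; first exact: e_pos.
  move=> x' ps' Hs' _ Hd; rewrite -Hs in Hs'.
  case: ps' Hs' Hd => [|[xi t] [|p' ps']] Hs' Hd; try by inversion Hs'.
  have [_ H12] := proj1 (Rmax_Rlt _ _ _) Hd.
  rewrite [ldist _ _]/= in H12.
  have [H12' _] := proj1 (Rmax_Rlt _ _ _) H12.
  have [H1 H2] := proj1 (Rmax_Rlt _ _ _) H12'.
  apply: Rlt_trans HN; apply/Ldist_agree; rewrite [Gl x _]/= [Gl x' _]/=.
  by apply: HM; apply/Ldist_agree.
- exists 1%R; split; first lra.
  move=> x' ps' Hs' _ _; rewrite -Hs in Hs'.
  case: ps' Hs' => [|[xi t] [|p' ps']] Hs'; try by inversion Hs'.
  by rewrite [Gl x _]/= [Gl x' _]/= Ldist_self.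
Qed.


Lemma Ladd_0l (a : laurent F) : Ladd (Lzero F) a = a.
Proof. by apply: Lext => k; rewrite Ladd_coef add0r. Qed.

Lemma Ladd_0r (a : laurent F) : Ladd a (Lzero F) = a.
Proof. by apply: Lext => k; rewrite Ladd_coef addr0. Qed.

Lemma mono_1r n : Lmul (mono n) (Lone F) = mono n.
Proof.
apply: Lext => k; rewrite (Lmul_mono _ _ (@mono_vanish n) (@mono_vanish2 n)) mono_nn mul1r Lone_coef /=.
case: (Z.eqb_spec (k - n) 0); case: (Z.eqb_spec k n) => //; lia.
Qed.

Lemma mono_inv n : Linv (mono n) = mono (- n).
Proof.
have Hn : coef (mono n) n <> 0 by rewrite mono_nn; apply/eqP; exact: oner_neq0.
have H1 := Linv_spec (@mono_vanish n) Hn.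
have H2 : Lmul (mono n) (mono (- n)) = Lone F.
  apply: Lext => k; rewrite (Lmul_mono _ _ (@mono_vanish n) (@mono_vanish2 n)) mono_nn mul1r Lone_coef /=.
  case: (Z.eqb_spec (k - n) (- n)); case: (Z.eqb_spec k 0) => //; lia.
apply: Lext => k.
apply: (inv_agree (K := (Z.abs k + Z.abs n)%Z) _ (@mono_vanish n) (@mono_vanish n) Hn _ H1 H2); try lia.
by [].
Qed.

Lemma mono_nz n : mono n <> Lzero F.
Proof.
move=> E; have := mono_nn n; rewrite E /= => /eqP; by rewrite eq_sym oner_eq0.
Qed.

Lemma fO_zero k : coef (fO (Lzero F)) k = 0.
Proof. rewrite fO_coefE; case: (k <? 0)%Z => //; by rewrite big1. Qed.

Lemma mono_inO (n : nat) : inO (mono (Z.of_nat n)).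
Proof. move=> k Hk; apply: mono_vanish; lia. Qed.

Lemma pdist3 (E : Defs.space F) (p p' : prod3 E) : pdist p p' =
  Rmax (Rmax (pdist p.1.1 p'.1.1) (pdist p.1.2 p'.1.2)) (Ldist p.2 p'.2).
Proof. by []. Qed.

Lemma pdistK (a b : laurent F) : @pdist F (Kspace F) a b = Ldist a b.
Proof. by []. Qed.

Lemma notCBGN : ~ @CBGN F 2 (Kspace F) (@inO F) (@fO F).
Proof.
move=> [_ [G [HG [HGc [_ [G2 [HG2 [HG2c _]]]]]]]].
pose p0 : pt (prod3 (Kspace F)) := (Lzero F, Lone F, Lzero F).
pose pn (n : nat) : pt (prod3 (Kspace F)) := (Lzero F, Lone F, mono (Z.of_nat n)).
pose e3 : pt (prod3 (Kspace F)) := (Lzero F, Lzero F, Lone F).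
have Up0 : U1 (E:=Kspace F) (@inO F) p0.
  split => /=; first by [].
  by rewrite Lmul_0l Ladd_0l.
have Upn : forall n, U1 (E:=Kspace F) (@inO F) (pn n).
  move=> n; split => /=; first by [].
  rewrite mono_1r Ladd_0l; exact: mono_inO.
have Gpn : forall n k, coef (G (pn n)) k =
    if (k + Z.of_nat n =? Z.of_nat (3 * n)./2)%Z then 1 else 0.
  move=> n k; rewrite HG //; last exact: mono_nz.
  rewrite (_ : diffq (E:=Kspace F) (@fO F) (pn n) = Lmul (Linv (mono (Z.of_nat n))) (Lsub (fO (Ladd (Lzero F) (Lmul (mono (Z.of_nat n)) (Lone F)))) (fO (Lzero F)))) //.
  rewrite mono_inv.
  rewrite (Lmul_mono _ _ (@mono_vanish _) (@mono_vanish2 _)) mono_nn mul1r Lsub_coef fO_zero subr0.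
  rewrite mono_1r Ladd_0l fO_mono.
  by have -> : (k - - Z.of_nat n = k + Z.of_nat n)%Z by lia.
have dist_pn : forall (N : Z) (n : nat), (N < Z.of_nat n)%Z ->
    Rlt (@pdist F (prod3 (Kspace F)) p0 (pn n)) (e N).
  move=> N n HN; rewrite pdist3 /=.
  apply: Rmax_lub_lt; first apply: Rmax_lub_lt; try (rewrite Ldist_self; exact: e_pos).
  apply/Ldist_agree => k Hk /=; rewrite [RHS](@mono_vanish (Z.of_nat n)) //; lia.
have c0 : forall k, coef (G p0) k = 0.
  move=> k.
  have [del [Hdel Hc]] := HGc p0 Up0 (e k) (e_pos k).
  have [N1 HN1] := e_small Hdel.
  pose n := Z.to_nat (Z.abs N1 + 2 * Z.abs k + 3).
  have Hd : Rlt (@pdist F (prod3 (Kspace F)) p0 (pn n)) del.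
    apply: Rlt_le_trans (dist_pn (Z.of_nat n - 1)%Z n _) _; first lia.
    apply: Rle_trans (Rlt_le _ _ HN1); apply: e_le; rewrite /n; lia.
  have := Hc (pn n) (Upn n) Hd => /Ldist_agree /(_ k (Z.le_refl k)) ->.
  rewrite Gpn; case: (Z.eqb_spec (k + Z.of_nat n) (Z.of_nat (3 * n)./2)) => // E.
  exfalso; rewrite /n in E; lia.
pose q0 : pt (prod3 (prod3 (Kspace F))) := (p0, e3, Lzero F).
pose qn (n : nat) : pt (prod3 (prod3 (Kspace F))) := (p0, e3, mono (Z.of_nat n)).
have Uq0 : U1 (E:=prod3 (Kspace F)) (U1 (E:=Kspace F) (@inO F)) q0.
  split => //=.
  by rewrite !Lmul_0l !Ladd_0r.
have Eqn : forall n, padd (qn n).1.1 (pscale (qn n).2 (qn n).1.2) = pn n.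
  move=> n; rewrite /= !Lmul_0r !Ladd_0r mono_1r Ladd_0l //.
have Uqn : forall n, U1 (E:=prod3 (Kspace F)) (U1 (E:=Kspace F) (@inO F)) (qn n).
  move=> n; split; first exact: Up0.
  rewrite Eqn; exact: Upn.
have G2qn : forall n k, coef (G2 (qn n)) k =
    if (k + 2 * Z.of_nat n =? Z.of_nat (3 * n)./2)%Z then 1 else 0.
  move=> n k; rewrite HG2 //; last exact: mono_nz.
  rewrite /diffq Eqn [(qn n).2]/= mono_inv.
  rewrite (Lmul_mono _ _ (@mono_vanish _) (@mono_vanish2 _)) mono_nn mul1r Lsub_coef c0 subr0.
  rewrite Gpn.
  by have -> : (k - - Z.of_nat n + Z.of_nat n = k + 2 * Z.of_nat n)%Z by lia.
have dist_qn : forall (N : Z) (n : nat), (N < Z.of_nat n)%Z ->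
    Rlt (@pdist F (prod3 (prod3 (Kspace F))) q0 (qn n)) (e N).
  move=> N n HN; rewrite pdist3 /=.
  apply: Rmax_lub_lt; first apply: Rmax_lub_lt; last first.
  - apply/Ldist_agree => k Hk /=; rewrite [RHS](@mono_vanish (Z.of_nat n)) //; lia.
  - rewrite !Ldist_self Rmax_left ?Rmax_left; try lra; exact: e_pos.
  - rewrite !Ldist_self Rmax_left ?Rmax_left; try lra; exact: e_pos.
have [del [Hdel Hc]] := HG2c q0 Uq0 (e 0) (e_pos 0).
have [N1 HN1] := e_small Hdel.
pose n := Z.to_nat (Z.abs N1 + 3).
have Hd : forall m, (n <= m)%nat -> Rlt (@pdist F (prod3 (prod3 (Kspace F))) q0 (qn m)) del.
  move=> m Hm.
  apply: Rlt_le_trans (dist_qn (Z.of_nat m - 1)%Z m _) _; first lia.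
  apply: Rle_trans (Rlt_le _ _ HN1); apply: e_le; rewrite /n in Hm; lia.
pose k := (Z.of_nat (3 * n)./2 - 2 * Z.of_nat n)%Z.
have Hk : (k <= 0)%Z by rewrite /k; lia.
have A1 := Hc (qn n) (Uqn n) (Hd n (leqnn n)).
have A2 := Hc (qn n.+2) (Uqn n.+2) (Hd n.+2 ltac:(lia)).
move/Ldist_agree: A1 => /(_ k Hk); move/Ldist_agree: A2 => /(_ k Hk).
rewrite !G2qn.
have -> : (k + 2 * Z.of_nat n =? Z.of_nat (3 * n)./2)%Z = true by apply/Z.eqb_eq; rewrite /k; lia.
have -> : (k + 2 * Z.of_nat n.+2 =? Z.of_nat (3 * n.+2)./2)%Z = false by apply/Z.eqb_neq; rewrite /k; lia.
move=> -> /eqP; by rewrite eq_sym oner_eq0.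
Qed.

End L.

Theorem theorem3p7 (F : finFieldType) :
  CLud_inf (@inO F) (@fO F) /\ ~ @CBGN F 2 (Kspace F) (@inO F) (@fO F).
Proof.
split; [move=> k; exact: CLud_all | exact: notCBGN].
Qed.
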